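(* If $\{P^{a,n}\}_{(a,n)\in\mathcal I\times\mathbb Z}$ and $\{Q^{a,n}\}_{(a,n)\in\mathcal I\times\mathbb Z}$ are collections of polynomials in $\mathcal O$ with widening gap, then the collection $\Big\{\sum_{(b,m)\in\mathcal I\times\mathbb Z}P^{b,m}\,\frac{\partial Q^{a,n}}{\partial X^{b,m}}\Big\}_{(a,n)\in\mathcal I\times\mathbb Z}$ has widening gap (and hence, given a further collection $\{R^{a,n}\}$ with widening gap, so does $\big\{\sum_{(b,m),(c,p)}P^{b,m}\frac{\partial Q^{c,p}}{\partial X^{b,m}}\frac{\partial R^{a,n}}{\partial X^{c,p}}\big\}_{(a,n)}$, and so on).
   Context: $\mathcal I$ is a finite index set and $\mathcal O=\mathbb C[X^{a,n}]_{(a,n)\in\mathcal I\times\mathbb Z}$. A collection $\{P^{a,n}\}_{(a,n)\in\mathcal I\times\mathbb Z}$ of polynomials in $\mathcal O$ has widening gap if, for every $K\ge1$, $P^{a,n}\in\mathbb C[X^{b,m}:|m|<|n|-K,\ b\in\mathcal I]$ for all $a\in\mathcal I$, for all but finitely many $n\in\mathbb Z$. (Each sum over $(b,m)$ above has only finitely many nonzero terms since $Q^{a,n}$ is a polynomial.) *)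

(* Defs.v *)
(* polynomials in the infinitely many variables X^{a,n},
   (a,n) in I * Z, over the complex numbers C = R[i] (R : realType),
   realised as the monoid algebra {malg C[{cmonom I * int}]} of multinomials. *)
From HB Require Import structures.
From mathcomp Require Import all_boot all_order all_algebra.
From mathcomp Require Import finmap.
From mathcomp Require Import reals.
From mathcomp.real_closed Require Import complex.
From mathcomp.multinomials Require Import monalg.

Set Implicit Arguments.
Unset Strict Implicit.
Unset Printing Implicit Defensive.

Import Order.TTheory GRing.Theory Num.Theory.
Local Open Scope ring_scope.
Local Open Scope fset_scope.

Definition var (I : finType) := (I * int)%type.
Definition Opoly (R : realType) (I : finType) :=
  {malg (complex R)[cmonom (var I)]}.

Definition pvars (R : realType) (I : finType) (P : Opoly R I) : {fset var I} :=
  \bigcup_(k <- msupp P) finsupp (cmonom_val k).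

Definition in_subring (R : realType) (I : finType) (S : pred (var I))
    (P : Opoly R I) : Prop :=
  forall k, k \in msupp P -> forall v : var I, (cmonom_val k v != 0)%N -> S v.

Definition pderiv (R : realType) (I : finType) (x : var I) (P : Opoly R I)
    : Opoly R I :=
  \sum_(k <- msupp P)
     << (P@_k *+ cmonom_val k x) *g [cmonom (cmonom_val k i - (i == x))%N | i in finsupp (cmonom_val k)]%M >>.

Definition widening_gap (R : realType) (I : finType)
    (P : I -> int -> Opoly R I) : Prop :=
  forall K : nat, (1 <= K)%N ->
    exists exc : seq int, forall n : int, n \notin exc ->
      forall a : I,
        in_subring (fun v : var I => `|v.2| < `|n| - K%:Z) (P a n).

(* The collection sum_{(b,m)} P^{b,m} dQ^{a,n}/dX^{b,m}; only finitely many
   terms are nonzero, namely those (b,m) occurring in Q^{a,n}. *)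
Definition derive_action (R : realType) (I : finType)
    (P Q : I -> int -> Opoly R I) : I -> int -> Opoly R I :=
  fun a n => \sum_(v <- pvars (Q a n)) P v.1 v.2 * pderiv v (Q a n).

(* Main.v *)
Require Import Defs.
From HB Require Import structures.
From mathcomp Require Import all_boot all_order all_algebra finmap zify.
From mathcomp Require Import reals.
From mathcomp.real_closed Require Import complex.
From mathcomp.multinomials Require Import monalg.
Set Implicit Arguments. Unset Strict Implicit. Unset Printing Implicit Defensive.
Import Order.TTheory GRing.Theory Num.Theory.
Local Open Scope ring_scope.


Section Helpers.
Variables (R : realType) (I : finType).
Implicit Types (p q : Opoly R I) (S T : pred (var I)).

Lemma sub_mono S T p : (forall v, S v -> T v) -> in_subring S p -> in_subring T p.
Proof. by move=> ST h k kp v kv; apply: ST; apply: h kv. Qed.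

Lemma sub0 S : in_subring S (0 : Opoly R I).
Proof. by move=> k; rewrite msupp0 in_fset0. Qed.

Lemma subD S p q : in_subring S p -> in_subring S q -> in_subring S (p + q).
Proof.
move=> hp hq k /(fsubsetP (msuppD_le _ _)); rewrite in_fsetU => /orP[].
  exact: hp.
exact: hq.
Qed.

Lemma subM S p q : in_subring S p -> in_subring S q -> in_subring S (p * q).
Proof.
move=> hp hq k /msuppM_le [k1 [k2 [k1p k2q ->]]] v.
rewrite cmM addn_eq0 negb_and => /orP[].
  exact: hp.
exact: hq.
Qed.

Lemma sub_sum S (T0 : eqType) (s : seq T0) (F : T0 -> Opoly R I) :
  (forall x, x \in s -> in_subring S (F x)) -> in_subring S (\sum_(x <- s) F x).
Proof.
elim: s => [|x s IH] h; first by rewrite big_nil; apply: sub0.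
rewrite big_cons; apply: subD; first by apply: h; rewrite inE eqxx.
by apply: IH => y ys; apply: h; rewrite inE ys orbT.
Qed.

Lemma sub_pderiv S x p : in_subring S p -> in_subring S (pderiv x p).
Proof.
move=> hp; rewrite /pderiv; apply: sub_sum => k kp k' /(fsubsetP msuppU_le).
rewrite in_fset1 => /eqP -> v.
rewrite cmE fsfun_fun /=.
case: ifP => // vk _; apply: (hp k kp).
by rewrite cmE_neq0.
Qed.

Lemma sub_pvars S p v : in_subring S p -> v \in pvars p -> S v.
Proof.
move=> hp; rewrite /pvars.
have : {subset (msupp p : seq _) <= msupp p} by [].
elim: (msupp p : seq _) => [|k s IH] hs; first by rewrite big_nil in_fset0.
rewrite big_cons in_fsetU => /orP[].
  by rewrite -cmE_neq0; apply: hp; apply: hs; rewrite inE eqxx.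
by apply: IH => y ys; apply: hs; rewrite inE ys orbT.
Qed.

Definition bnd p : nat := (\max_(k <- msupp p) \max_(v <- finsupp (cmonom_val k)) `|v.2|)%N.

Lemma sub_bnd p : in_subring (fun v : var I => `|v.2| <= (bnd p)%:Z) p.
Proof.
move=> k kp v kv.
have h1 : (`|v.2| <= \max_(v <- finsupp (cmonom_val k)) `|v.2|)%N.
  by apply: (@leq_bigmax_seq _ _ predT (fun v : var I => `|v.2|%N)) => //; rewrite -cmE_neq0.
have h2 := @leq_bigmax_seq _ (msupp p : seq _) predT
   (fun k : cmonom (var I) => \max_(v <- finsupp (cmonom_val k)) `|v.2|)%N k kp erefl.
rewrite -abszE lez_nat /bnd; exact: leq_trans h1 h2.
Qed.

End Helpers.

Theorem corollary3p2 (R : realType) (I : finType)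
    (P Q : I -> int -> Opoly R I) :
  widening_gap P -> widening_gap Q -> widening_gap (derive_action P Q).
Proof.
move=> hP hQ K K1.
have [eP heP] := hP K K1.
have [eQ heQ] := hQ K K1.
pose B : nat := (\max_(b : I) \max_(m <- eP) bnd (P b m))%N.
have hB : forall b m, m \in eP ->
    in_subring (fun v : var I => `|v.2| <= B%:Z) (P b m).
  move=> b m me; apply: (sub_mono _ (@sub_bnd _ _ (P b m))) => v /= h.
  apply: (le_trans h); rewrite lez_nat.
  apply: (leq_trans _ (leq_bigmax b)).
  exact: (@leq_bigmax_seq _ eP predT (fun m => bnd (P b m)) m me erefl).
pose N := (B + K).+1.
exists (eQ ++ map Posz (iota 0 N) ++ map Negz (iota 0 N)) => n.
rewrite mem_cat negb_or => /andP[nQ nPN] a.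
have nbig : (B + K)%:Z < `|n|.
  rewrite ltNge; apply/negP => hk.
  have : n \in map Posz (iota 0 N) ++ map Negz (iota 0 N).
    rewrite mem_cat; case: n {nPN nQ} hk => k hk; apply/orP; [left|right];
      apply: map_f; rewrite mem_iota add0n /N ltnS.
      by rewrite lez_nat in hk.
    by move: hk; rewrite leq0n /=; lia.
  by move=> h; rewrite h in nPN.
have hQn := heQ n nQ a.
rewrite /derive_action; apply: sub_sum => v vin.
apply: subM; last exact: sub_pderiv.
have hv := sub_pvars hQn vin; move: hv => /= hv.
case: (boolP (v.2 \in eP)) => [me|mne].
  apply: (sub_mono _ (hB v.1 v.2 me)) => w /= hw.
  lia.
apply: (sub_mono _ (heP v.2 mne v.1)) => w /= hw.
have : (1 <= K%:Z) by rewrite lez_nat.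
lia.
Qed.
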